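(* The first difference sequence $\Delta(\mathbf{t}_{3/2})$ equals the Toeplitz word $\mathcal{T}(w)$ determined by the pattern $w=01?0?10??$ (a $(9,4)$-Toeplitz word).
   Context: The Thue--Morse word in base $3/2$ is the unique binary sequence $\mathbf{t}_{3/2}=(t_n)_{n\ge0}$ with $t_0=0$, $t_{3n}=t_{3n+1}=t_{2n}$ and $t_{3n+2}=1-t_{2n+1}$ for all $n\ge0$ (equivalently, $t_n$ is the digit sum modulo $2$ of the base-$3/2$ expansion of $n$, where $\langle 0\rangle$ is empty and $\langle n\rangle=\langle m\rangle d$ for $2n=3m+d$, $d\in\{0,1,2\}$). For a binary sequence $\mathbf{x}=(x_n)$, $\Delta(\mathbf{x})=(x_{n+1}-x_n\bmod 2)_{n\ge0}$. Toeplitz words: let $A$ be an alphabet and $?\notin A$; for a word $w\in A(A\cup\{?\})^*$ and an infinite word $\mathbf{u}$ over $A\cup\{?\}$, let $F_w(\mathbf{u})$ be the word obtained by replacing the successive occurrences of $?$ in $\mathbf{u}$ by the successive letters of $w^\omega=www\cdots$. Set $\mathcal{T}_0(w)=?^\omega$, $\mathcal{T}_{i+1}(w)=F_w(\mathcal{T}_i(w))$; the limit $\mathcal{T}(w)=\lim_i\mathcal{T}_i(w)\in A^{\mathbb{N}}$ exists and is the Toeplitz word determined by $w$; if $|w|=p$ and $w$ has $q$ occurrences of $?$, it is called a $(p,q)$-Toeplitz word. *)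

(* Defs.v *)
From mathcomp Require Import all_boot.
Set Implicit Arguments. Unset Strict Implicit. Unset Printing Implicit Defensive.

(* Digit sum of the base-3/2 expansion of n: <0> is empty, and
   <n> = <m> d where 2n = 3m + d, d in {0,1,2}.  Since m < n for n > 0,
   fuel n suffices; [digsum32 n] uses fuel n. *)
Fixpoint digsum32_fuel (fuel n : nat) : nat :=
  match fuel with
  | 0 => 0
  | k.+1 => if n == 0 then 0
            else ((n.*2) %% 3) + digsum32_fuel k ((n.*2) %/ 3)
  end.

Definition digsum32 (n : nat) : nat := digsum32_fuel n n.

(* Thue--Morse word in base 3/2 over {0,1} = {false,true}. *)
Definition t32 (n : nat) : bool := odd (digsum32 n).

Definition Delta (x : nat -> bool) : nat -> bool := fun n => x n.+1 (+) x n.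

(* Toeplitz words: letters of A u {?} are [option A], with ? = None. *)
Section Toeplitz.
Variable A : eqType.

(* F_w(u): replace the k-th occurrence (k = 0,1,...) of ? in u by the
   k-th letter of w^omega, i.e. nth (k mod |w|) of w. *)
Definition Ftoep (w : seq (option A)) (u : nat -> option A) : nat -> option A :=
  fun n => match u n with
           | Some a => Some a
           | None => nth None w ((count (fun m => u m == None) (iota 0 n)) %% size w)
           end.

Fixpoint Ttoep (w : seq (option A)) (i : nat) : nat -> option A :=
  match i with
  | 0 => fun _ => None
  | i'.+1 => Ftoep w (Ttoep w i')
  end.

Definition is_toeplitz_word (w : seq (option A)) (x : nat -> A) : Prop :=
  forall n, exists i0, forall i, i0 <= i -> Ttoep w i n = Some (x n).
End Toeplitz.

Definition w_pattern : seq (option bool) :=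
  [:: Some false; Some true; None; Some false; None; Some true; Some false; None; None].

(* Main.v *)
Require Import Defs.
From mathcomp Require Import all_boot zify.

Lemma fuel_eq f g n : n <= f -> n <= g -> digsum32_fuel f n = digsum32_fuel g n.
Proof.
elim: f g n => [|f IH] [|g] n /= Hf Hg.
- by [].
- by case: n Hf Hg.
- by case: n Hf Hg.
case: eqP => [//|n0].
rewrite (IH g) //; lia.
Qed.

Lemma ds_step n : 0 < n -> digsum32 n = n.*2 %% 3 + digsum32 (n.*2 %/ 3).
Proof.
move=> n0; rewrite /digsum32; case: n n0 => [//|n] _ /=.
congr (_ + _); apply: fuel_eq; lia.
Qed.

Lemma t0 n : t32 (3*n) = t32 (2*n).
Proof.
case: n => [//|n]; rewrite /t32 ds_step; last lia.
have -> : (3*n.+1).*2 %% 3 = 0 by lia.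
have -> : (3*n.+1).*2 %/ 3 = 2 * n.+1 by lia.
by rewrite add0n.
Qed.

Lemma t1 n : t32 (3*n+1) = t32 (2*n).
Proof.
rewrite /t32 ds_step; last lia.
have -> : (3*n+1).*2 %% 3 = 2 by lia.
have -> : (3*n+1).*2 %/ 3 = 2 * n by lia.
by rewrite oddD.
Qed.

Lemma t2 n : t32 (3*n+2) = ~~ t32 (2*n+1).
Proof.
rewrite /t32 ds_step; last lia.
have -> : (3*n+2).*2 %% 3 = 1 by lia.
have -> : (3*n+2).*2 %/ 3 = 2 * n + 1 by lia.
by rewrite oddD.
Qed.
Notation x := (Delta t32).

Lemma dx0 n : x (3*n) = false.
Proof. rewrite /Delta -addn1 t1 t0; exact: addbb. Qed.
Lemma dx1 n : x (3*n+1) = ~~ x (2*n).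
Proof.
rewrite /Delta; have -> : (3*n+1).+1 = 3*n+2 by lia.
rewrite t2 t1 addn1.
by case: (t32 (2*n).+1); case: (t32 (2*n)).
Qed.
Lemma dx2 n : x (3*n+2) = ~~ x (2*n+1).
Proof.
rewrite /Delta; have -> : (3*n+2).+1 = 3*(n+1) by lia.
rewrite t0 t2; have -> : 2*(n+1) = (2*n+1).+1 by lia.
by case: (t32 (2*n+1).+1); case: (t32 (2*n+1)).
Qed.

Definition w := w_pattern.
Definition Sx (u : nat -> option bool) n : option bool :=
  let k := n %/ 9 in
  match n %% 9 with
  | 2 => u (4*k) | 4 => u (4*k+1) | 7 => u (4*k+2) | 8 => u (4*k+3)
  | j => nth None w j end.

Lemma Sx_block u k j : j < 9 -> Sx u (9*k+j) =
  match j with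
  | 2 => u (4*k) | 4 => u (4*k+1) | 7 => u (4*k+2) | 8 => u (4*k+3)
  | j => nth None w j end.
Proof.
move=> hj; rewrite /Sx.
have -> : (9*k+j) %% 9 = j by lia.
have -> : (9*k+j) %/ 9 = k by lia.
by case: j hj => [|[|[|[|[|[|[|[|[|j]]]]]]]]].
Qed.

Definition cnt (u : nat -> option bool) n := count (fun m => u m == None) (iota 0 n).

Lemma cnt_split u a b : cnt u (a + b) = cnt u a + count (fun m => u (a + m) == None) (iota 0 b).
Proof. rewrite /cnt iotaD count_cat add0n.
have -> : iota a b = map (addn a) (iota 0 b) by rewrite -iotaDl addn0.
by rewrite count_map. Qed.

Lemma cnt_S9 u k : cnt (Sx u) (9*k) = cnt u (4*k).
Proof.
elim: k => [//|k IH].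
have -> : 9 * k.+1 = 9*k + 9 by lia.
have -> : 4 * k.+1 = 4*k + 4 by lia.
rewrite (cnt_split _ (9*k)) (cnt_split _ (4*k)) IH; congr (_ + _).
by rewrite /= !Sx_block //= !add0n !addn0.
Qed.

Lemma cnt_hole u k j : j < 9 -> cnt (Sx u) (9*k+j) = cnt u (4*k +
   (match j with 0|1|2 => 0 | 3|4 => 1 | 5|6|7 => 2 | _ => 3 end)).
Proof.
move=> hj; rewrite cnt_split cnt_S9 (cnt_split u (4*k)); congr (_ + _).
case: j hj => [|[|[|[|[|[|[|[|[|j]]]]]]]]] //= _; rewrite !Sx_block //=. all: by rewrite !add0n !addn0.
Qed.

Lemma F_ext (u v : nat -> option bool) n : (forall m, u m = v m) -> Ftoep w u n = Ftoep w v n.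
Proof.
move=> H; rewrite /Ftoep H; congr (match _ with Some a => _ | None => nth None w (_ %% _) end).
by apply: eq_count => m; rewrite H.
Qed.

Lemma S_ext (u v : nat -> option bool) n : (forall m, u m = v m) -> Sx u n = Sx v n.
Proof. by move=> H; rewrite /Sx !H. Qed.

Lemma FS_block u k j : j < 9 -> Ftoep w (Sx u) (9*k+j) = Sx (Ftoep w u) (9*k+j).
Proof.
move=> hj; rewrite Sx_block // {1}/Ftoep Sx_block //.
have := cnt_hole u k j hj; rewrite /cnt => ->.
case: j hj => [|[|[|[|[|[|[|[|[|j]]]]]]]]] //= _.
all: by rewrite /Ftoep ?addn0.
Qed.

Lemma FS u n : Ftoep w (Sx u) n = Sx (Ftoep w u) n.
Proof. by rewrite (divn_eq n 9) mulnC FS_block // ltn_pmod. Qed.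

Lemma TS i n : Ttoep w i.+1 n = Sx (Ttoep w i) n.
Proof.
elim: i n => [|i IH] n.
- rewrite /= /Ftoep /Sx.
  have -> : count (fun m => (None : option bool) == None) (iota 0 n) = n.
    by rewrite (eq_count (a2 := predT)) // count_predT size_iota.
  by case: (n %% 9) (ltn_pmod n (isT : 0 < 9)) => [|[|[|[|[|[|[|[|[|j]]]]]]]]].
- rewrite [LHS]/= (F_ext _ _ n IH) FS; exact: S_ext.
Qed.

Lemma x90 k : x (9*k+0) = false.
Proof.
have e0 : 9*k+0 = 3*(3*k) by lia.
by rewrite e0 dx0.
Qed.
Lemma x91 k : x (9*k+1) = true.
Proof.
have e0 : 9*k+1 = 3*(3*k)+1 by lia.
have e1 : 2*(3*k) = 3*(2*k) by lia.
by rewrite e0 dx1 e1 dx0.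
Qed.
Lemma x92 k : x (9*k+2) = x (4*k).
Proof.
have e0 : 9*k+2 = 3*(3*k)+2 by lia.
have e1 : 2*(3*k)+1 = 3*(2*k)+1 by lia.
have e2 : 2*(2*k) = 4*k by lia.
by rewrite e0 dx2 e1 dx1 negbK e2.
Qed.
Lemma x93 k : x (9*k+3) = false.
Proof.
have e0 : 9*k+3 = 3*(3*k+1) by lia.
by rewrite e0 dx0.
Qed.
Lemma x94 k : x (9*k+4) = x (4*k+1).
Proof.
have e0 : 9*k+4 = 3*(3*k+1)+1 by lia.
have e1 : 2*(3*k+1) = 3*(2*k)+2 by lia.
have e2 : 2*(2*k)+1 = 4*k+1 by lia.
by rewrite e0 dx1 e1 dx2 negbK e2.
Qed.
Lemma x95 k : x (9*k+5) = true.
Proof.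
have e0 : 9*k+5 = 3*(3*k+1)+2 by lia.
have e1 : 2*(3*k+1)+1 = 3*(2*k+1) by lia.
by rewrite e0 dx2 e1 dx0.
Qed.
Lemma x96 k : x (9*k+6) = false.
Proof.
have e0 : 9*k+6 = 3*(3*k+2) by lia.
by rewrite e0 dx0.
Qed.
Lemma x97 k : x (9*k+7) = x (4*k+2).
Proof.
have e0 : 9*k+7 = 3*(3*k+2)+1 by lia.
have e1 : 2*(3*k+2) = 3*(2*k+1)+1 by lia.
have e2 : 2*(2*k+1) = 4*k+2 by lia.
by rewrite e0 dx1 e1 dx1 negbK e2.
Qed.
Lemma x98 k : x (9*k+8) = x (4*k+3).
Proof.
have e0 : 9*k+8 = 3*(3*k+2)+2 by lia.
have e1 : 2*(3*k+2)+1 = 3*(2*k+1)+2 by lia.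
have e2 : 2*(2*k+1)+1 = 4*k+3 by lia.
by rewrite e0 dx2 e1 dx2 negbK e2.
Qed.

Theorem proposition11 : is_toeplitz_word w_pattern (Delta t32).
Proof.
move=> n; elim/ltn_ind: n => n IH.
have [k [j [hj En]]] : exists k j, j < 9 /\ n = 9*k+j.
  by exists (n%/9), (n%%9); split; [exact: ltn_pmod | rewrite mulnC -divn_eq].
subst n.
have key i : Ttoep w_pattern i.+1 (9*k+j) = match j with
  | 2 => Ttoep w i (4*k) | 4 => Ttoep w i (4*k+1) | 7 => Ttoep w i (4*k+2) | 8 => Ttoep w i (4*k+3)
  | j => nth None w j end by rewrite TS Sx_block.
case: j hj key IH => [|[|[|[|[|[|[|[|[|j]]]]]]]]] // _ key IH.
- by exists 1 => [[|i]] // _; rewrite key x90.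
- by exists 1 => [[|i]] // _; rewrite key x91.
- have [|i0 H] := IH (4*k); first lia.
  by exists i0.+1 => [[|i]] // hi; rewrite key x92 H.
- by exists 1 => [[|i]] // _; rewrite key x93.
- have [|i0 H] := IH (4*k+1); first lia.
  by exists i0.+1 => [[|i]] // hi; rewrite key x94 H.
- by exists 1 => [[|i]] // _; rewrite key x95.
- by exists 1 => [[|i]] // _; rewrite key x96.
- have [|i0 H] := IH (4*k+2); first lia.
  by exists i0.+1 => [[|i]] // hi; rewrite key x97 H.
- have [|i0 H] := IH (4*k+3); first lia.
  by exists i0.+1 => [[|i]] // hi; rewrite key x98 H.
Qed.
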